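(* For $n\ge 2$, let $\overline{\mathcal M}_{=}(n)$ be the number of MAU pairs $(u,v)$ of binary words with $|u|=|v|=n$ and $|u|_c=|v|_c$ for all $c\in\{a,b\}$. Then $$\overline{\mathcal M}_{=}(n)=2\sum_{i=1}^{n-1}\frac{1}{n-1}\binom{n-1}{i}\binom{n-1}{i-1}.$$
   Context: Let $\Sigma=\{a,b\}$. For a word $w$ and a letter $c$, $|w|_c$ denotes the number of occurrences of $c$ in $w$. Two words $x,y$ are abelian equivalent, written $x\sim_{\mathrm{abl}}y$, if $|x|_c=|y|_c$ for all $c\in\Sigma$. For words $u,v$: a pair $(x,y)$ is an internal abelian-border of $(u,v)$ if $x$ is a nonempty proper suffix of $u$, $y$ is a proper prefix of $v$, and $x\sim_{\mathrm{abl}}y$; it is an external abelian-border of $(u,v)$ if $x$ is a nonempty proper prefix of $u$, $y$ is a proper suffix of $v$, and $x\sim_{\mathrm{abl}}y$. The pair $(u,v)$ is mutually abelian-bordered (MAB) if it has both an internal and an external abelian-border, and mutually abelian-unbordered (MAU) if it has neither. *)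

(* Defs.v *)
From mathcomp Require Import all_boot all_order all_algebra.
Set Implicit Arguments. Unset Strict Implicit. Unset Printing Implicit Defensive.

(* Binary alphabet {a,b} encoded as bool: true = a, false = b. *)
Definition letter := bool.
Definition word := seq letter.

Definition abl_equiv (x y : word) : bool :=
  [forall c : letter, count_mem c x == count_mem c y].

Definition suffix_len (k : nat) (u : word) : word := drop (size u - k) u.

Definition has_internal_abl_border (u v : word) : bool :=
  [exists k : 'I_(size u), exists j : 'I_(size v),
     (0 < (k : nat)) && abl_equiv (suffix_len k u) (take j v)].

Definition has_external_abl_border (u v : word) : bool :=
  [exists k : 'I_(size u), exists j : 'I_(size v),
     (0 < (k : nat)) && abl_equiv (take k u) (suffix_len j v)].

Definition MAU (u v : word) : bool :=
  ~~ has_internal_abl_border u v && ~~ has_external_abl_border u v.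

(* Main.v *)
Require Import Defs.
From mathcomp Require Import all_boot all_order all_algebra zify ring lra.
Import GRing.Theory Num.Theory.
Local Open Scope ring_scope.
Set Implicit Arguments. Unset Strict Implicit. Unset Printing Implicit Defensive.

Definition pb := (bool * bool)%type.
Fixpoint allseqs (n : nat) : seq (seq pb) :=
  if n is n'.+1 then
    let A := allseqs n' in
    map (cons (true,true)) A ++ map (cons (true,false)) A ++
    map (cons (false,true)) A ++ map (cons (false,false)) A
  else [:: [::]].

Definition ht (q : seq pb) : int :=
  (count_mem true (unzip1 q))%:Z - (count_mem true (unzip2 q))%:Z.
Definition step (x : pb) : int := ht [:: x].

Fixpoint NZ (h : int) (q : seq pb) : bool :=
  if q is x :: q' then (h != 0) && NZ (h + step x) q' else h == 0.

Lemma count_allseqsS (P : pred (seq pb)) n :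
  count P (allseqs n.+1) =
  (count (fun s => P ((true,true) :: s)) (allseqs n) +
  count (fun s => P ((true,false) :: s)) (allseqs n) +
  count (fun s => P ((false,true) :: s)) (allseqs n) +
  count (fun s => P ((false,false) :: s)) (allseqs n))%N.
Proof. by rewrite /= !count_cat !count_map !addnA. Qed.

Lemma count_NZS h n :
  count (NZ h) (allseqs n.+1) =
  ((h != 0) * (2 * count (NZ h) (allseqs n) + count (NZ (h+1)) (allseqs n)
     + count (NZ (h-1)) (allseqs n)))%N.
Proof.
rewrite count_allseqsS /=.
case: (h != 0); last by rewrite !count_pred0.
rewrite !mul1n.
have e0 : forall b, h + step (b,b) = h by case; rewrite /step /ht /= addr0.
have e1 : h + step (true,false) = h + 1 by [].
have e2 : h + step (false,true) = h - 1 by [].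
have E g : (fun s => true && NZ g s) =1 NZ g by [].
rewrite !e0 e1 e2 !(eq_count (E _)). lia.
Qed.

Definition Cz (N : nat) (z : int) : int :=
  match z with Posz m => ('C(N, m))%:Z | Negz _ => 0 end.

Lemma CzS N z : Cz N.+1 z = Cz N z + Cz N (z - 1).
Proof.
case: z => [[|m]|m].
- have -> : (Posz 0 - 1) = Negz 0 by [].
  by rewrite /= !bin0 addr0.
- have -> : (Posz m.+1 - 1) = Posz m by rewrite -addn1 PoszD addrK.
  by rewrite /= binS PoszD.
- have -> : (Negz m - 1) = Negz m.+1 by rewrite !NegzE; lia.
  by rewrite /= addr0.
Qed.

Lemma CzS2 N z : Cz N.+2 z = Cz N z + 2 * Cz N (z - 1) + Cz N (z - 2).
Proof.
rewrite CzS (CzS N z) (CzS N (z-1)).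
rewrite (_ : z - 1 - 1 = z - 2); last by rewrite -addrA.

ring.
Qed.

Lemma key N a b c1 c2 c3 a2 b2 a3 b3 A B :
  c1 = Cz N a - Cz N b -> c2 = Cz N a2 - Cz N b2 -> c3 = Cz N a3 - Cz N b3 ->
  a2 = a - 1 -> b2 = b + 1 -> a3 = a + 1 -> b3 = b - 1 -> A = a + 1 -> B = b + 1 ->
  2 * c1 + c2 + c3 = Cz N.+2 A - Cz N.+2 B.
Proof.
move=> -> -> -> -> -> -> -> -> ->.
rewrite (CzS2 N (a+1)) (CzS2 N (b+1)).
have -> : a + 1 - 1 = a by ring.
have -> : a + 1 - 2 = a - 1 by ring.
have -> : b + 1 - 1 = b by ring.
have -> : b + 1 - 2 = b - 1 by ring.
ring.
Qed.

Lemma count_NZ0 g : count (NZ g) (allseqs 0) = (g == 0) :> nat.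
Proof. by rewrite /= addn0. Qed.

Lemma cNZ L (h : nat) :
  (count (NZ (Posz h)) (allseqs L.+1))%:Z =
  Cz (2 * L + 1) (Posz (L + 1) - Posz h) - Cz (2 * L + 1) (Posz (L + 1 + h)).
Proof.
elim: L h => [|L IH] h.
  rewrite count_NZS !count_NZ0.
  case: h => [|[|h]].
  - by rewrite subr0.
  - by [].
  rewrite (_ : Posz (0+1) - Posz h.+2 = Negz h); last by rewrite NegzE; lia.
  rewrite /Cz bin_small; last by lia.
  rewrite mul1n.
  have -> : (Posz h.+2 == 0) = false by [].
  have -> : (Posz h.+2 + 1 == 0) = false by [].
  have -> : (Posz h.+2 - 1 == 0) = false by rewrite (_ : Posz h.+2 - 1 = Posz h.+1) //; lia.
  by [].
rewrite count_NZS.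
case: h => [|h].
  rewrite mul0n subr0 addn0; ring.
rewrite mul1n !PoszD (_ : forall x y z : int, x + (x + 0) + y + z = 2*x + y + z); last by move=> *; ring.
rewrite (_ : (2 * L.+1 + 1 = (2*L+1).+2)%N); last by lia.
have I1 := IH h.+1.
have I2 := IH h.+2.
have I3 := IH h.
rewrite (_ : Posz h.+1 + 1 = Posz h.+2); last by lia.
rewrite (_ : Posz h.+1 - 1 = Posz h); last by lia.
apply: (key I1 I2 I3); lia.
Qed.

Lemma cNZ_opp L h : count (NZ (- h)) (allseqs L) = count (NZ h) (allseqs L).
Proof.
elim: L h => [|L IH] h; first by rewrite !count_NZ0 oppr_eq0.
rewrite !count_NZS oppr_eq0 IH.
rewrite (_ : - h + 1 = - (h - 1)); last by ring.
rewrite (_ : - h - 1 = - (h + 1)); last by ring.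
rewrite !IH; congr (_ * _); exact: addnAC.
Qed.

Lemma ht_cons x q : ht (x :: q) = step x + ht q.
Proof. rewrite /step /ht /= !PoszD; ring. Qed.

Lemma ht_nil : ht [::] = 0. Proof. by []. Qed.

Lemma iota1 n : iota 1 n = map succn (iota 0 n).
Proof. by rewrite -[1%N]/(1+0)%N iotaDl. Qed.

Lemma NZ_take h q :
  NZ h q = (h + ht q == 0) && all (fun k => h + ht (take k q) != 0) (iota 0 (size q)).
Proof.
elim: q h => [|x q IH] h; first by rewrite /= addr0 andbT.
rewrite [NZ _ (_ :: _)]/= [size _]/= IH.
have -> : iota 0 (size q).+1 = 0 :: map succn (iota 0 (size q)) by rewrite /= iota1.
rewrite [all _ (_ :: _)]/= all_map.
rewrite ht_nil addr0. rewrite ht_cons addrA.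
have E : preim succn (fun k => h + ht (take k (x :: q)) != 0) =1
   (fun k => h + step x + ht (take k q) != 0) by move=> k /=; rewrite ht_cons addrA.
rewrite (eq_all E).
rewrite andbCA; congr (_ && _); rewrite /step /ht; congr (_ == 0); ring.
Qed.

Definition Ptot (p : seq pb) : bool :=
  (ht p == 0) && all (fun k => ht (take k p) != 0) (iota 1 (size p).-1).

Lemma Ptot_cons x q : Ptot (x :: q) = NZ (step x) q.
Proof.
rewrite /Ptot NZ_take [size _]/= iota1 all_map ht_cons.
have E : preim succn (fun k => ht (take k (x :: q)) != 0) =1
   (fun k => step x + ht (take k q) != 0) by move=> k /=; rewrite ht_cons.
by rewrite (eq_all E).
Qed.

Lemma count_Ptot m : count Ptot (allseqs m.+2) = (2 * count (NZ 1) (allseqs m.+1))%N.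
Proof.
rewrite count_allseqsS !(eq_count (Ptot_cons _)).
have -> : step (true,true) = 0 by [].
have -> : step (false,false) = 0 by [].
have -> : step (true,false) = 1 by [].
have -> : step (false,true) = -1 by [].
rewrite cNZ_opp count_NZS eqxx mul0n.
by rewrite add0n addn0 mul2n addnn.
Qed.

Lemma card_pred (T : finType) (P : pred T) : #|[set x | P x]| = count P (enum T).
Proof.
rewrite cardsE cardE /enum_mem size_filter /= (eq_filter (a2 := predT)) //.
rewrite filter_predT; exact: eq_count.
Qed.

Lemma mem_cons_map (x y : pb) (s : seq pb) A :
  (y :: s \in map (cons x) A) = (y == x) && (s \in A).
Proof.
apply/mapP/andP => [[t tA [-> ->]] | [/eqP -> sA]]; first by [].
by exists s.
Qed.

Lemma hasnc (x y : pb) A B : x != y -> has (mem (map (cons x) A)) (map (cons y) B) = false.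
Proof.
move=> nxy; rewrite has_map; apply/hasPn => s _ /=.
by rewrite mem_cons_map eq_sym (negbTE nxy).
Qed.

Lemma mem_allseqs n s : (s \in allseqs n) = (size s == n).
Proof.
elim: n s => [|n IH] [|y s] //=.
- rewrite !mem_cat; apply/negP => /or4P [] /mapP [t _] //.
- rewrite !mem_cat !mem_cons_map IH eqSS.
  by case: y => [[] []]; rewrite ?andbF ?orbF.
Qed.

Lemma uniq_allseqs n : uniq (allseqs n).
Proof.
elim: n => [|n IH] //=.
by rewrite !cat_uniq !has_cat !hasnc // !map_inj_uniq ?IH //; move=> a b [].

Qed.

Lemma card_count (P : pred (seq pb)) n :
  #|[set uv : n.-tuple bool * n.-tuple bool | P (zip uv.2 (rev uv.1))]|
  = count P (allseqs n).
Proof.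
pose f (uv : n.-tuple bool * n.-tuple bool) := zip uv.2 (rev uv.1).
rewrite (card_pred (fun uv => P (f uv))) -(count_map f P).
have finj : injective f.
  move=> [u1 v1] [u2 v2]; rewrite /f /= => e.
  have e1 := congr1 unzip1 e; have e2 := congr1 unzip2 e.
  rewrite !unzip1_zip ?size_rev ?size_tuple // in e1.
  rewrite !unzip2_zip ?size_rev ?size_tuple // in e2.
  by move/(can_inj revK): e2 => /val_inj ->; move/val_inj: e1 => ->.
have pe : perm_eq (map f (enum {: n.-tuple bool * n.-tuple bool})) (allseqs n).
  apply: uniq_perm; first by rewrite map_inj_uniq // enum_uniq.
    exact: uniq_allseqs.
  move=> s; rewrite mem_allseqs; apply/mapP/eqP.
    by move=> [[u v] _ ->]; rewrite /f size_zip size_rev !size_tuple minnn.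
  move=> hs.
  have h1 : size (unzip1 s) == n by rewrite size_map hs.
  have h2 : size (rev (unzip2 s)) == n by rewrite size_rev size_map hs.
  exists (Tuple h2, Tuple h1); first by rewrite mem_enum.
  by rewrite /f /= revK zip_unzip.
by move/permP: pe => ->.
Qed.

Notation cnt s := (count_mem true s).

Lemma cnt_tf (s : seq bool) : (count_mem true s + count_mem false s)%N = size s.
Proof. by elim: s => //= [[]] s IH; rewrite /= ?add0n ?add1n ?addn0 -?IH; lia. Qed.

Lemma abl_eq x y : abl_equiv x y = (size x == size y) && (cnt x == cnt y).
Proof.
apply/forallP/andP => [H | [/eqP Hs /eqP Hc] c].
  have Ht := H true; have Hf := H false.
  move/eqP: Ht => Ht; move/eqP: Hf => Hf.
  by rewrite -(cnt_tf x) -(cnt_tf y) Ht Hf.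
have Hf : count_mem false x = count_mem false y.
  by move: (cnt_tf x); rewrite Hc Hs -(cnt_tf y) => /addnI.
by case: c; apply/eqP.
Qed.

Lemma take_zip' (v w : seq bool) k : take k (zip v w) = zip (take k v) (take k w).
Proof. by elim: v w k => [|a v IH] [|b w] [|k] //=; rewrite IH. Qed.

Lemma ht_zip (v w : seq bool) : size v = size w -> ht (zip v w) = (cnt v)%:Z - (cnt w)%:Z.
Proof. by move=> e; rewrite /ht unzip1_zip ?unzip2_zip ?e. Qed.

Lemma Ptot_uv (u v : seq bool) : size v = size u ->
  Ptot (zip v (rev u)) = (cnt v == cnt u) &&
    all (fun k => cnt (take k v) != cnt (drop (size u - k) u)) (iota 1 (size u).-1).
Proof.
move=> e.
rewrite /Ptot ht_zip ?size_rev // count_rev subr_eq0 eqz_nat size_zip size_rev e minnn.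
congr (_ && _); apply: eq_in_all => k; rewrite mem_iota => /andP [k1 k2].
rewrite take_zip' ht_zip; last by rewrite !size_take size_rev e.
by rewrite subr_eq0 eqz_nat take_rev count_rev.
Qed.

Lemma int_has (u v : word) : size v = size u ->
  has_internal_abl_border u v =
  has (fun k => cnt (take k v) == cnt (drop (size u - k) u)) (iota 1 (size u).-1).
Proof.
move=> e; apply/existsP/hasP.
  move=> [[k kn] /existsP [[j jn] /andP [/= k0]]].
  rewrite abl_eq /suffix_len /= => /andP [/eqP hs /eqP hc].
  rewrite size_drop size_take jn in hs.
  have kj : k = j by lia.
  exists k; first by rewrite mem_iota; lia.
  by rewrite hc kj.
move=> [k]; rewrite mem_iota => /andP [k1 k2] /eqP hc.
have ku : (k < size u)%N by lia.
have kv : (k < size v)%N by lia.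
exists (Ordinal ku); apply/existsP; exists (Ordinal kv).
rewrite /= k1 /= abl_eq /suffix_len size_drop size_take kv hc eqxx andbT.
apply/eqP; lia.
Qed.

Lemma ext_int (u v : word) : size v = size u -> cnt u = cnt v ->
  has_external_abl_border u v -> has_internal_abl_border u v.
Proof.
move=> e ec /existsP [[k kn] /existsP [[j jn] /andP [/= k0]]].
rewrite abl_eq /suffix_len /= => /andP [/eqP hs /eqP hc].
rewrite size_drop size_take kn in hs.
rewrite int_has //; apply/hasP; exists (size u - k)%N.
  rewrite mem_iota; lia.
rewrite (_ : (size u - (size u - k))%N = k); last by lia.
have cu : cnt u = (cnt (take k u) + cnt (drop k u))%N by rewrite -count_cat cat_take_drop.
have cv : cnt v = (cnt (take (size u - k) v) + cnt (drop (size u - k) v))%N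
  by rewrite -count_cat cat_take_drop.
rewrite (_ : (size v - j = size u - k)%N) in hc; last by lia.
by rewrite -(eqn_add2r (cnt (drop (size u - k) v))) -cv -ec cu hc addnC.
Qed.

Lemma MAU_Ptot (u v : word) : size v = size u ->
  MAU u v && abl_equiv u v = Ptot (zip v (rev u)).
Proof.
move=> e; rewrite Ptot_uv // abl_eq e eqxx andTb [cnt v == cnt u]eq_sym.
case ec: (cnt u == cnt v); first last.
  by rewrite andbF andFb.
move/eqP: ec => ec; rewrite andbT andTb.
rewrite (_ : all _ _ = ~~ has (fun k => cnt (take k v) == cnt (drop (size u - k) u))
   (iota 1 (size u).-1)); last by rewrite -all_predC.
rewrite -int_has // /MAU.
case hi: (has_internal_abl_border u v) => //=.
case he: (has_external_abl_border u v) => //.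
by rewrite (ext_int e ec he) in hi.
Qed.

Lemma vand_sum m :
  (\sum_(1 <= i < m.+2) 'C(m.+1, i) * 'C(m.+1, i - 1) = 'C(2 * m + 2, m))%N.
Proof.
have V := binomial.Vandermonde m.+1 m.+1 m.+2.
rewrite -(big_mkord xpredT (fun j => 'C(m.+1, j) * 'C(m.+1, m.+2 - j))%N) in V.
rewrite big_ltn // bin0 mul1n (bin_small (ltnSn _)) add0n big_nat_recr //= in V.
rewrite (bin_small (ltnSn _)) mul0n addn0 in V.
rewrite (_ : (2 * m + 2 = m.+1 + m.+1)%N); last by lia.
rewrite -bin_sub; last by lia.
rewrite (_ : (m.+1 + m.+1 - m = m.+2)%N); last by lia.
rewrite -V; apply: eq_big_nat => i /andP [i1 i2].
rewrite -(bin_sub (n := m.+1) (m := (i - 1)%N)); last by lia.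
congr (_ * 'C(_, _))%N; lia.
Qed.

Theorem mainTheorem9 (n : nat) (hn : (2 <= n)%N) :
  ((#|[set uv : n.-tuple bool * n.-tuple bool |
        MAU uv.1 uv.2 && abl_equiv uv.1 uv.2]|)%:R : rat) =
  2 * \sum_(1 <= i < n)
        ((n - 1)%:R^-1 * ('C(n - 1, i))%:R * ('C(n - 1, i - 1))%:R).
Proof.
case: n hn => [|[|m]] // _.
have -> : [set uv : m.+2.-tuple bool * m.+2.-tuple bool |
        MAU uv.1 uv.2 && abl_equiv uv.1 uv.2] =
   [set uv : m.+2.-tuple bool * m.+2.-tuple bool | Ptot (zip uv.2 (rev uv.1))].
  by apply/setP => uv; rewrite !inE MAU_Ptot // !size_tuple.
rewrite card_count count_Ptot.
have C := cNZ m 1.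
rewrite (_ : Posz (m + 1) - Posz 1 = Posz m) in C; last by lia.
rewrite (_ : (m + 1 + 1 = m.+2)%N) in C; last by lia.
set c := count _ _ in C *.
set X := 'C(2 * m + 1, m) in C.
set Y := 'C(2 * m + 1, m.+2) in C.
have cXY : (c + Y = X)%N by move: C; rewrite /Cz /=; lia.
rewrite (_ : (m.+2 - 1 = m.+1)%N) //.
have S : \sum_(1 <= i < m.+2) ((m.+1)%:R^-1 * ('C(m.+1, i))%:R * ('C(m.+1, i - 1))%:R)
   = (m.+1)%:R^-1 * ((\sum_(1 <= i < m.+2) 'C(m.+1, i) * 'C(m.+1, i - 1))%N)%:R :> rat.
  by rewrite natr_sum big_distrr; apply: eq_bigr => i _; rewrite /= natrM mulrA.
rewrite S vand_sum.
have F1 : 'C(2 * m + 1, m.+1) = X.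
  rewrite /X -bin_sub; last by lia.
  by congr 'C(_, _); lia.
have F2 : (m.+2 * Y = m * X)%N.
  by rewrite /Y mul_bin_left F1 (_ : (2 * m + 1 - m.+1 = m)%N) //; lia.
have F3 : 'C(2 * m + 2, m) = (X + Y)%N.
  rewrite -bin_sub; last by lia.
  rewrite (_ : (2 * m + 2 - m = (m.+1).+1)%N); last by lia.
  rewrite (_ : (2 * m + 2 = (2 * m + 1).+1)%N); last by lia.
  by rewrite binS F1 addnC.
have E : (m.+1 * c = X + Y)%N by rewrite -cXY; nia.
rewrite F3 -E !natrM mulKf // pnatr_eq0.
by [].
Qed.
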